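(* $\liminf_{n\to\infty}D(n)=\frac12$. Consequently, for every real $u$ with $0\le u<\frac12$, the set $\mathcal{N}(u)=\{n\ge1: D(n)>u\}$ contains all but finitely many positive integers; in particular it has natural density and logarithmic density both equal to $1$.
   Context: A subset $S\subseteq \mathbb{Z}/n\mathbb{Z}$ is called product-free if there are no $a,b,c\in S$ (not necessarily distinct) with $ab\equiv c\pmod n$. For a positive integer $n$, $D(n)$ denotes the maximum of $|S|/n$ over all product-free subsets $S$ of $\mathbb{Z}/n\mathbb{Z}$. *)

(* Defs.v *)
From mathcomp Require Import all_boot.

Module PF.
Definition product_free (n : nat) (S : {set 'I_n}) : bool :=
  [forall a in S, forall b in S, forall c in S, (a * b) %% n != c %[mod n]].

Definition Dnum (n : nat) : nat :=
  \max_(S : {set 'I_n} | @product_free n S) #|S|.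
End PF.

From Stdlib Require Import Reals ClassicalEpsilon.
Open Scope R_scope.

(* D(n) = max |S|/n over product-free S ⊆ Z/nZ (meaningful for n >= 1). *)
Definition D (n : nat) : R := INR (PF.Dnum n) / INR n.

Definition ind (A : nat -> Prop) (n : nat) : R :=
  if excluded_middle_informative (A n) then 1 else 0.

Definition count_upto (A : nat -> Prop) (N : nat) : R :=
  sum_f_R0 (fun n => if Nat.eqb n 0 then 0 else ind A n) N.
Definition logsum_upto (A : nat -> Prop) (N : nat) : R :=
  sum_f_R0 (fun n => if Nat.eqb n 0 then 0 else ind A n / INR n) N.

Definition has_natural_density (A : nat -> Prop) (d : R) : Prop :=
  Un_cv (fun N => count_upto A N / INR N) d.

Definition has_log_density (A : nat -> Prop) (d : R) : Prop :=
  Un_cv (fun N => logsum_upto A N / ln (INR N)) d.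

Definition liminf_eq (a : nat -> R) (l : R) : Prop :=
  (forall eps, eps > 0 -> exists N, forall n, (N <= n)%nat -> l - eps < a n) /\
  (forall eps, eps > 0 -> forall N, exists n, (N <= n)%nat /\ a n < l + eps).

Definition Nset (u : R) (n : nat) : Prop := (1 <= n)%nat /\ D n > u.

(* Main.v *)
From mathcomp Require Import all_boot all_algebra.
From mathcomp Require Import zify.
Require Import Defs.

Module PFaux.
Set Implicit Arguments. Unset Strict Implicit.
Local Open Scope nat_scope.

Lemma dvdn_modr' d m n : d %| m -> (d %| n %% m) = (d %| n).
Proof. by move=> dm; rewrite /dvdn modn_dvdm. Qed.

Lemma cancel_mod g n x y : coprime g n -> g * x = g * y %[mod n] -> x = y %[mod n].
Proof.
move=> co.
wlog le: x y / x <= y.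
  move=> H; case: (leqP x y) => [/H//|/ltnW lt e]; by apply/esym/H.
move=> /eqP; rewrite eq_sym eqn_mod_dvd ?leq_mul2l ?le ?orbT // -mulnBr.
rewrite Gauss_dvdr; last by rewrite coprime_sym.
by rewrite -eqn_mod_dvd // eq_sym => /eqP.
Qed.

Section Key.
Variables (p c k : nat) (chi : nat -> bool).
Hypothesis pP : prime p.
Hypothesis c_gt0 : 0 < c.
Hypothesis chi_mod : forall u, chi u = chi (u %% p ^ c).

Lemma coprime_p0 : coprime p 0 = false.
Proof. by rewrite /coprime gcdn0; apply/negbTE; rewrite neq_ltn prime_gt1 ?orbT. Qed.

Lemma decomp a w : coprime p w -> a + c <= k ->
  let y := (p ^ a * w) %% p ^ k in
  [/\ y != 0, logn p y = a & chi (y %/ p ^ a) = chi w].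
Proof.
move=> cw le y.
have ek : p ^ k = p ^ a * p ^ (k - a) by rewrite -expnD subnKC //; lia.
have ey : y = p ^ a * (w %% p ^ (k - a)) by rewrite /y ek muln_modr.
have pd : p %| p ^ (k - a) by rewrite -{1}(expn1 p) dvdn_exp2l //; lia.
have cw' : coprime p (w %% p ^ (k - a)).
  by rewrite -coprime_modr (modn_dvdm _ pd) coprime_modr.
have pa : 0 < p ^ a by rewrite expn_gt0 prime_gt0.
split.
- rewrite ey muln_eq0 negb_or -lt0n pa /=; apply/negP=> /eqP e.
  by move: cw'; rewrite e coprime_p0.
- by rewrite ey mulnC logn_Gauss // pfactorK.
- rewrite ey mulKn // chi_mod modn_dvdm ?dvdn_exp2l -?chi_mod //; lia.
Qed.
End Key.


Section Key2.
Variables (p c k : nat) (chi : nat -> bool).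
Hypothesis pP : prime p.
Hypothesis c_gt0 : 0 < c.
Hypothesis chi_mod : forall u, chi u = chi (u %% p ^ c).
Hypothesis chi_mul : forall u w, coprime p u -> coprime p w -> chi (u * w) = (chi u == chi w).

Definition inS (y : nat) : bool :=
  [&& y != 0, logn p y + c <= k & chi (y %/ p ^ logn p y) == odd (logn p y)].

Lemma struct (y : nat) : y != 0 -> exists2 u, coprime p u & y = p ^ logn p y * u /\ y %/ p ^ logn p y = u.
Proof.
move=> y0; have yp : 0 < y by rewrite lt0n.
have [m cm ey] := pfactor_coprime pP yp.
exists m => //; split; first by rewrite mulnC.
by rewrite {1}ey mulnK // expn_gt0 prime_gt0.
Qed.

Lemma prod_notS y1 y2 : inS y1 -> inS y2 -> ~~ inS ((y1 * y2) %% p ^ k).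
Proof.
case/and3P=> y10 l1 c1; case/and3P=> y20 l2 c2.
have [u1 cu1 [e1 d1]] := struct y10; have [u2 cu2 [e2 d2]] := struct y20.
set v1 := logn p y1 in l1 c1 e1 d1; set v2 := logn p y2 in l2 c2 e2 d2.
have ep : y1 * y2 = p ^ (v1 + v2) * (u1 * u2).
  by rewrite e1 e2 expnD mulnACA.
case: (leqP (v1 + v2 + c) k) => hk.
  have cu : coprime p (u1 * u2) by rewrite coprimeMr cu1.
  have [nz lg ch] := decomp pP c_gt0 chi_mod cu hk.
  rewrite ep /inS lg ch chi_mul // -d1 -d2 (eqP c1) (eqP c2) oddD.
  by case: (odd v1); case: (odd v2); rewrite /= ?andbF.
apply/negP=> /and3P[nz l3 _].
set y3 := (y1 * y2) %% p ^ k in nz l3.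
have dv : p ^ (minn (v1 + v2) k) %| y3.
  rewrite dvdn_modr'; last by rewrite dvdn_exp2l // geq_minr.
  by rewrite ep dvdn_mulr // dvdn_exp2l // geq_minl.
move: dv; rewrite pfactor_dvdn // ?lt0n // => h.
move: (logn p y3) h l3 hk c_gt0 => L; move: (v1 + v2) => V.
rewrite /minn; case: ltnP => hm h1 h2 h3 h4; clear -hm h1 h2 h3 h4; lia.
Qed.

Lemma flip g y : coprime p g -> chi g = false -> y != 0 -> logn p y + c <= k -> ~~ inS y ->
   inS ((g * y) %% p ^ k).
Proof.
move=> cg chg y0 l ny.
have [u cu [e d]] := struct y0.
set v := logn p y in l e d.
have ep : g * y = p ^ v * (g * u) by rewrite e mulnCA.
have cgu : coprime p (g * u) by rewrite coprimeMr cg.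
have [nz lg ch] := decomp pP c_gt0 chi_mod cgu l.
move: ny; rewrite /inS ep lg ch y0 l chi_mul // chg -/v d /=.
by rewrite nz; case: (chi u); case: (odd v).
Qed.
End Key2.


Lemma mult_count n d : #|[set x : 'I_n | d %| x]| <= (n %/ d).+1.
Proof.
set A := [set x : 'I_n | d %| x].
pose h := fun x : 'I_n => (inord (x %/ d) : 'I_(n %/ d).+1).
have hinj : {in A &, injective h}.
  move=> x y; rewrite !inE => dx dy /(congr1 (@nat_of_ord _)).
  have bx : x %/ d < (n %/ d).+1 by rewrite ltnS leq_div2r // ltnW.
  have by' : y %/ d < (n %/ d).+1 by rewrite ltnS leq_div2r // ltnW.
  rewrite /h (inordK bx) (inordK by') => e.
  by apply: val_inj; rewrite /= -(divnK dx) -(divnK dy) e.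
by rewrite -(card_in_imset hinj) -[X in _ <= X]card_ord max_card.
Qed.

Lemma lower_bound n p c k (chi : nat -> bool) g :
  prime p -> 0 < c -> (forall u, chi u = chi (u %% p ^ c)) ->
  (forall u w, coprime p u -> coprime p w -> chi (u * w) = (chi u == chi w)) ->
  c <= k -> p ^ k %| n -> 0 < n -> coprime g n -> coprime p g -> chi g = false ->
  n <= 2 * PF.Dnum n + (n %/ p ^ (k - c + 1)).+1.
Proof.
move=> pP c0 cmod cmul ck qn n0 cgn cpg chg.
set q := p ^ k; set d := p ^ (k - c + 1).
have dq : d %| q by rewrite dvdn_exp2l //; clear -c0 ck; lia.
pose S := [set x : 'I_n | inS p c k chi (x %% q)].
have PFS : PF.product_free n S.
  apply/forall_inP => a aS; apply/forall_inP => b bS; apply/forall_inP => z zS.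
  rewrite modn_mod (modn_small (ltn_ord z)); apply/eqP => e.
  move: zS aS bS; rewrite !inE -e modn_dvdm // -modnMm => zS aS bS.
  by move: (prod_notS pP c0 cmod cmul aS bS); rewrite zS.
have SD : #|S| <= PF.Dnum n by rewrite /PF.Dnum; apply: leq_bigmax_cond.
pose f := fun x : 'I_n => Ordinal (ltn_pmod (g * x) n0).
have finj : injective f.
  move=> x y /(congr1 val) /= /eqP e; apply: val_inj => /=.
  rewrite -(modn_small (ltn_ord x)) -(modn_small (ltn_ord y)).
  by apply: (cancel_mod cgn); apply/eqP.
pose T := [set x : 'I_n | ~~ (d %| x)].
have TS : T \subset S :|: f @^-1: S.
  apply/subsetP => x; rewrite !inE => dx.
  have y0 : x %% q != 0.
    apply: contra dx => /eqP h; apply: dvdn_trans dq _; by rewrite /dvdn h.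
  have yl : logn p (x %% q) + c <= k.
    rewrite leqNgt; apply: contra dx => h.
    rewrite -(dvdn_modr' _ dq) pfactor_dvdn ?lt0n //.
    move: h; move: (logn _ _) => L; clear -c0 ck; lia.
  case xS : (inS p c k chi (x %% q)) => //=.
  rewrite modn_dvdm // -modnMmr.
  by apply: (flip pP c0 cmod cmul) => //; rewrite xS.
have cT : #|T| <= 2 * #|S|.
  apply: leq_trans (subset_leq_card TS) _.
  by rewrite (leq_trans (leq_card_setU _ _)) // card_preimset // addnn -mul2n.
have cTC : #|~: T| <= (n %/ d).+1.
  apply: leq_trans (mult_count n d).
  by apply: subset_leq_card; apply/subsetP => x; rewrite !inE negbK.
rewrite -{1}(card_ord n) -(cardsC T).
apply: leq_add; last exact: cTC.
by rewrite (leq_trans cT) // leq_mul2l SD orbT.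

Qed.


Definition chi2 (u : nat) : bool := u %% 4 == 1.

Lemma chi2_mod u : chi2 u = chi2 (u %% 2 ^ 2).
Proof. by rewrite /chi2 expnS expn1 modn_mod. Qed.

Lemma odd4 u : coprime 2 u -> u %% 4 = 1 \/ u %% 4 = 3.
Proof. move=> h; have : u %% 2 = 1 by rewrite modn2 -coprime2n h. lia. Qed.

Lemma chi2_mul u w : coprime 2 u -> coprime 2 w -> chi2 (u * w) = (chi2 u == chi2 w).
Proof.
move=> /odd4 hu /odd4 hw; rewrite /chi2 -modnMm.
by case: hu => ->; case: hw => ->.
Qed.

Section OddChi.
Variable p : nat.
Hypothesis pP : prime p.
Hypothesis p2 : 2 < p.

Definition chio (u : nat) : bool := u ^ (p.-1 %/ 2) %% p == 1.

Lemma chio_mod u : chio u = chio (u %% p ^ 1).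
Proof. by rewrite /chio expn1 modnXm. Qed.

Lemma oddp : p.-1 = (p.-1 %/ 2) * 2.
Proof.
have [e|op] := even_prime pP; first by move: p2; rewrite e.
have : p %% 2 = 1 by rewrite modn2 op.
move: (divn_eq p.-1 2) => h1 h2.
rewrite {1}h1; suff : p.-1 %% 2 = 0 by move=> ->; rewrite addn0.
lia.
Qed.

Lemma fermat1 u : coprime p u -> u ^ p.-1 = 1 %[mod p].
Proof.
move=> cu; apply: (@cancel_mod u); first by rewrite coprime_sym.
rewrite muln1 -expnS prednK ?prime_gt0 //; exact: fermat_little.
Qed.

Lemma pm1 u : coprime p u -> u ^ (p.-1 %/ 2) %% p = 1 \/ u ^ (p.-1 %/ 2) %% p = p.-1.
Proof.
move=> cu; set w := u ^ (p.-1 %/ 2) %% p.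
have wp : w < p by rewrite ltn_pmod ?prime_gt0.
have ww : w * w %% p = 1.
  rewrite modnMm -expnD addnn -mul2n mulnC -oddp fermat1 // modn_small //.
  exact: prime_gt1.
have w0 : 0 < w by case: w ww wp => //; rewrite mul0n mod0n.
have : p %| (w.-1) * (w.+1).
  have e : w.-1 * w.+1 = w * w - 1 by clear -w0; nia.
  rewrite e -eqn_mod_dvd; last by clear -w0; nia.
  by rewrite ww modn_small // prime_gt1.
rewrite Euclid_dvdM // => /orP[h|h].
  left; have : w.-1 = 0.
    apply/eqP; apply: contraLR h; rewrite -lt0n => h.
    by rewrite gtnNdvd //; clear -wp w0; lia.
  by clear -w0; lia.
right; have := dvdn_leq (ltn0Sn _) h; clear -wp; lia.
Qed.

Lemma pm1mul a b : a = 1 \/ a = p.-1 -> b = 1 \/ b = p.-1 ->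
  (a * b %% p == 1) = ((a == 1) == (b == 1)).
Proof.
have p1 : 1 < p by apply: prime_gt1.
have ne : (p.-1 == 1) = false by apply/eqP; clear -p2; lia.
have e : p.-1 * p.-1 = (p - 2) * p + 1 by clear -p2; nia.
have pm : p.-1 %% p = p.-1 by rewrite modn_small //; clear -p2; lia.
move=> [->|->] [->|->].
- by rewrite muln1 modn_small.
- by rewrite mul1n pm ne.
- by rewrite muln1 pm ne.
- by rewrite e modnMDl modn_small // ne.
Qed.

Lemma chio_mul u w : coprime p u -> coprime p w -> chio (u * w) = (chio u == chio w).
Proof.
move=> cu cw; rewrite /chio expnMn -modnMm.
exact: pm1mul (pm1 cu) (pm1 cw).
Qed.
End OddChi.


Section NonRes.
Import GRing.Theory.


Lemma nonres p : prime p -> 2 < p -> exists2 g, coprime p g & chio p g = false.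
Proof.
move=> pP p2.
set h := (p.-1 %/ 2)%N.
have hp : (0 < h)%N by rewrite /h divn_gt0 //; clear -p2; lia.
have hlt : (h < p.-1)%N.
  have e : p.-1 = (h * 2)%N := oddp pP p2.
  rewrite e; clear -hp; lia.
suff : ~~ all (chio p) (iota 1 p.-1).
  case/allPn => g; rewrite mem_iota => /andP[g1 g2] cg; exists g => //.
    rewrite prime_coprime // gtnNdvd //; clear -g1 g2; lia.
  by apply/negbTE.
apply/negP => Hall.
pose rs := [seq ((i%:R)%R : 'F_p) | i <- iota 1 p.-1].
have Hu : all (h.-unity_root)%R rs.
  apply/allP => z /mapP[i ii ->]; rewrite unity_rootE -natrX.
  have := allP Hall i ii; rewrite /chio -/h => /eqP e.
  by apply/eqP/val_inj; rewrite /= !val_Fp_nat // e modn_small // prime_gt1.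
have Hq : uniq rs.
  have pe : (1 + p.-1 = p)%N by rewrite add1n prednK // prime_gt0.
  rewrite map_inj_in_uniq ?iota_uniq // => i j; rewrite !mem_iota pe => /andP[_ i2] /andP[_ j2].
  by move/(congr1 val); rewrite /= !val_Fp_nat // !modn_small.
have := max_unity_roots hp Hu Hq; rewrite size_map size_iota leqNgt hlt //.
Qed.

End NonRes.

Lemma crt_g n p c (chi : nat -> bool) g0 : prime p -> 0 < n -> 0 < c -> c <= logn p n ->
  (forall u, chi u = chi (u %% p ^ c)) -> coprime p g0 -> chi g0 = false ->
  exists g, [/\ coprime g n, coprime p g & chi g = false].
Proof.
move=> pP n0 c0 cl cmod cg0 chg0.
have co := coprime_partC p n n.
set m1 := n`_p in co *; set m2 := n`_p^' in co *.
set g := chinese m1 m2 g0 1.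
have e1 : g = g0 %[mod m1] by apply: chinese_modl.
have e2 : g = 1 %[mod m2] by apply: chinese_modr.
have m1e : m1 = p ^ logn p n by rewrite /m1 p_part.
have dc : p ^ c %| m1 by rewrite m1e dvdn_exp2l.
have dp : p %| m1 by rewrite m1e -{1}(expn1 p) dvdn_exp2l //; clear -c0 cl; lia.
exists g; split.
- rewrite -(partnC p n0) -/m1 -/m2 coprimeMr; apply/andP; split.
    rewrite m1e; apply: coprimeXr; rewrite coprime_sym -coprime_modr.
    by rewrite -(modn_dvdm g dp) e1 (modn_dvdm g0 dp) coprime_modr.
  rewrite -coprime_modl e2; move: (m2) => [|[|m]] //.
  by rewrite modn_small // coprime1n.
- rewrite -coprime_modr -(modn_dvdm g dp) e1 (modn_dvdm g0 dp) coprime_modr //.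
- by rewrite cmod -(modn_dvdm g dc) e1 (modn_dvdm g0 dc) -cmod.
Qed.

Lemma prod_b Q m : \prod_(0 <= p < m) (if p <= Q then Q.+1 else 1) <= Q.+1 ^ minn m Q.+1.
Proof.
elim: m => [|m IH]; first by rewrite big_geq.
rewrite big_nat_recr //; case: (leqP m Q) => hm.
  have -> : minn m.+1 Q.+1 = (minn m Q.+1).+1.
    by clear -hm; lia.
  by rewrite expnS [X in _ <= X]mulnC leq_mul2r IH orbT.
have -> : minn m.+1 Q.+1 = minn m Q.+1.
  by clear -hm; lia.
by rewrite /= muln1.
Qed.

Lemma bigpp Q n : 0 < n -> (forall p, prime p -> p < n.+1 -> p ^ logn p n <= Q) -> n <= Q.+1 ^ Q.+1.
Proof.
move=> n0 H.
rewrite -{1}(partnT n0) /partn.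
apply: leq_trans (_ : \prod_(0 <= p < n.+1) (if p <= Q then Q.+1 else 1) <= _).
  rewrite big_mkcond /=; rewrite big_nat_cond [X in _ <= X]big_nat_cond.
  apply: leq_prod => p /andP[/andP[_ pn] _].
  case: (posnP (logn p n)) => [->|lp]; first by case: ifP.
  have pP : prime p by move: lp; rewrite logn_gt0 mem_primes => /andP[].
  have h := H p pP pn.
  have pq : p <= Q.
    apply: leq_trans _ h; rewrite -[p in p <= _]expn1; apply: leq_pexp2l => //; exact: prime_gt0.
  by rewrite pq (leq_trans h).
apply: leq_trans (prod_b Q n.+1) _.
by rewrite leq_pexp2l // geq_minr.
Qed.

Lemma pp_exists Q n : 0 < n -> Q.+1 ^ Q.+1 < n -> exists2 p, prime p & Q < p ^ logn p n.
Proof.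
move=> n0 nl.
case: (boolP [exists p : 'I_n.+1, prime p && (Q < p ^ logn p n)]) => [/existsP [p /andP[pp hq]]| H].
  by exists p.
exfalso.
have : n <= Q.+1 ^ Q.+1.
  apply: bigpp => // p pp pl; move/existsPn: H => /(_ (Ordinal pl)).
  by rewrite /= pp /= -leqNgt.
by rewrite leqNgt nl.
Qed.

Lemma lower_final Q : exists N, forall n, N <= n ->
  exists d, Q <= d /\ n <= 2 * PF.Dnum n + (n %/ d).+1.
Proof.
set Q' := 2 * Q + 4.
exists (Q'.+1 ^ Q'.+1).+1 => n hn.
have n0 : 0 < n by clear -hn; lia.
have [p pP hp] := pp_exists n0 hn.
set e := logn p n in hp.
have pdn : p ^ e %| n by rewrite -p_part dvdn_part.
have e0 : 0 < e by case: (posnP e) hp => // ->; rewrite expn0; clear; lia.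
have [p2|op] := even_prime pP.
  subst p.
  have e2 : 2 <= e.
    case: e e0 hp {pdn} => [|[|e']] // _; rewrite expn1; clear; lia.
  have [g [cgn cpg chg]] := @crt_g n 2 2 chi2 3 pP n0 (ltn0Sn _) e2 chi2_mod erefl erefl.
  have := lower_bound pP (ltn0Sn _) chi2_mod chi2_mul e2 pdn n0 cgn cpg chg.
  set d := 2 ^ (e - 2 + 1) => H; exists d; split => //.
  have : 2 ^ e = d * 2 by rewrite /d -expnSr; congr (2 ^ _); clear -e2; lia.
  clear -hp; rewrite /Q'; lia.
have p2 : 2 < p by rewrite odd_prime_gt2.
have [g0 cg0 chg0] := nonres pP p2.
have [g [cgn cpg chg]] := @crt_g n p 1 (chio p) g0 pP n0 (ltn0Sn _) e0 (chio_mod p) cg0 chg0.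
have := lower_bound pP (ltn0Sn _) (chio_mod p) (chio_mul pP p2) e0 pdn n0 cgn cpg chg.
rewrite subnK // => H; exists (p ^ e); split => //.
clear -hp; rewrite /Q'; lia.
Qed.

Lemma upper_prime p : prime p -> 2 * PF.Dnum p <= p.
Proof.
move=> pP; have p0 := prime_gt0 pP.
rewrite mulnC -leq_divRL //; apply/bigmax_leqP => S PFS.
rewrite leq_divRL // muln2 -addnn.
case: (set_0Vmem S) => [->|[a aS]]; first by rewrite cards0.
have a0 : 0 < a.
  rewrite lt0n; apply/negP => /eqP a0.
  move/forall_inP: PFS => /(_ a aS) /forall_inP /(_ a aS) /forall_inP /(_ a aS).
  by rewrite a0 modn_mod mod0n.
have ca : coprime a p by rewrite coprime_sym prime_coprime // gtnNdvd.
pose f := fun x : 'I_p => Ordinal (ltn_pmod (a * x) p0).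
have finj : injective f.
  move=> x y /(congr1 val) /= /eqP e; apply: val_inj => /=.
  rewrite -(modn_small (ltn_ord x)) -(modn_small (ltn_ord y)).
  by apply: (cancel_mod ca); apply/eqP.
have dis : S :&: f @: S = set0.
  apply/setP => z; rewrite !inE; apply/negP => /andP[zS /imsetP[x xS ez]].
  move/forall_inP: PFS => /(_ a aS) /forall_inP /(_ x xS) /forall_inP /(_ z zS).
  by rewrite ez /= modn_mod eqxx.
have := cardsU S (f @: S); rewrite dis cards0 subn0 card_imset // => <-.
by rewrite -[X in _ <= X](card_ord p) max_card.
Qed.

Lemma lower_nat Q : 0 < Q -> exists N, forall n, N <= n -> Q * n <= 2 * Q * PF.Dnum n + n + Q.
Proof.
move=> Q0; have [N HN] := lower_final Q; exists N => n /HN [d [Qd H]].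
have d0 : 0 < d by apply: leq_trans Qd.
have h1 : n <= 2 * PF.Dnum n + (n %/ Q).+1.
  by apply: leq_trans H _; rewrite leq_add2l ltnS leq_div2l.
have h2 : n %/ Q * Q <= n by apply: leq_divM.
move: h1 h2; move: (n %/ Q) (PF.Dnum n) => a b; clear; nia.
Qed.

End PFaux.
Import PFaux.
From Stdlib Require Import Reals Lra ClassicalEpsilon.

Open Scope R_scope.

Lemma nat_le_R (a b : nat) : leq a b -> INR a <= INR b.
Proof. by move/leP; apply: le_INR. Qed.
Arguments nat_le_R {a b}.

Lemma lower_R Q : leq 1 Q -> exists N, forall n, leq N n ->
  INR Q * INR n <= 2 * INR Q * INR (PF.Dnum n) + INR n + INR Q.
Proof.
move=> Q0; have [N HN] := lower_nat Q0; exists N => n /HN /nat_le_R.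
by rewrite !plus_INR !mult_INR.
Qed.

Lemma part1 eps : eps > 0 -> exists N, forall n, leq N n -> 1/2 - eps < D n.
Proof.
move=> he.
have [q Hq] := INR_unbounded (/ eps).
have [N HN] := @lower_R q.+1 (leq0n q).
exists (maxn N q.+1) => n; rewrite geq_max => /andP[h1 h2].
have := HN n h1.
have := nat_le_R h2.
set Q := INR q.+1; set m := INR n; set dd := INR (PF.Dnum n) => Hqm H.
have q1 : INR q < Q by rewrite /Q S_INR; lra.
have qe : Q * eps > 1.
  have : / eps < Q by lra.
  move=> h; apply (Rmult_lt_compat_r eps) in h; last lra.
  by rewrite Rinv_l in h; lra.
have Q0 : 0 < Q by rewrite /Q S_INR; have := pos_INR q; lra.
have m0 : 0 < m by lra.
rewrite /D -/m -/dd.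
apply (Rmult_lt_reg_r m) => //.
rewrite /Rdiv Rmult_assoc Rinv_l; last lra.
rewrite Rmult_1_r.
apply (Rmult_lt_reg_l (2 * Q)); first lra.
nra.
Qed.

Lemma part2 eps : eps > 0 -> forall N, exists n, leq N n /\ D n < 1/2 + eps.
Proof.
move=> he N; have [p Np pP] := prime_above N.
exists p; split; first exact: ltnW.
have := nat_le_R (upper_prime pP); rewrite mult_INR /=.
have p0 : 0 < INR p by apply: lt_0_INR; apply/ltP; apply: prime_gt0.
rewrite /D => h.
apply: Rle_lt_trans (_ : _ <= 1/2) _; last lra.
apply (Rmult_le_reg_r (INR p)) => //.
rewrite /Rdiv Rmult_assoc Rinv_l; lra.
Qed.

Lemma ind01 (A : nat -> Prop) n : 0 <= Defs.ind A n <= 1.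
Proof. rewrite /Defs.ind; case: (excluded_middle_informative (A n)) => h /=; lra. Qed.

Lemma ind1 (A : nat -> Prop) n : A n -> Defs.ind A n = 1.
Proof. by rewrite /Defs.ind; case: (excluded_middle_informative (A n)). Qed.

Lemma INR_S1 N : 1 <= INR N.+1.
Proof. rewrite S_INR; have := pos_INR N; lra. Qed.

Lemma count_bounds (A : nat -> Prop) M : (forall n, leq M n -> A n) -> forall N,
  0 <= count_upto A N /\ count_upto A N <= INR N /\ INR N - INR M <= count_upto A N.
Proof.
move=> HA; elim => [|N [IH1 [IH2 IH3]]].
  rewrite /count_upto /=; have := pos_INR M; lra.
have -> : count_upto A N.+1 = count_upto A N + Defs.ind A N.+1 by [].
rewrite S_INR; have hi := ind01 A N.+1.
case: (leqP M N.+1) => hM.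
  rewrite ind1; [lra | exact: HA].
have : INR N.+1 < INR M by apply: lt_INR; apply/ltP.
rewrite S_INR => ?; lra.
Qed.

Definition Hs (N : nat) : R := sum_f_R0 (fun n => if Nat.eqb n 0 then 0 else / INR n) N.

Lemma log_bounds (A : nat -> Prop) M : (forall n, leq M n -> A n) -> forall N,
  0 <= logsum_upto A N /\ logsum_upto A N <= Hs N /\ Hs N <= INR N /\
  Hs N - INR M <= logsum_upto A N.
Proof.
move=> HA; elim => [|N [IH1 [IH2 [IH3 IH4]]]].
  rewrite /logsum_upto /Hs /=; have := pos_INR M; lra.
have -> : logsum_upto A N.+1 = logsum_upto A N + Defs.ind A N.+1 / INR N.+1 by [].
have -> : Hs N.+1 = Hs N + / INR N.+1 by [].
have h1 := INR_S1 N.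
have i0 : 0 < / INR N.+1 by apply: Rinv_0_lt_compat; lra.
have i1 : / INR N.+1 <= 1.
  rewrite -Rinv_1; apply: Rinv_le_contravar; lra.
have := ind01 A N.+1 => hi.
have hf : 0 <= Defs.ind A N.+1 / INR N.+1 <= / INR N.+1.
  rewrite /Rdiv; split; first by apply: Rmult_le_pos; lra.
  rewrite -{2}(Rmult_1_l (/ INR N.+1)); apply: Rmult_le_compat_r; lra.
have eS := S_INR N.
case: (leqP M N.+1) => hM.
  rewrite ind1; last exact: HA.
  rewrite /Rdiv Rmult_1_l; lra.
have : INR N.+1 < INR M by apply: lt_INR; apply/ltP.
move=> ?; lra.
Qed.

Lemma ln_le_sub1 x : 0 < x -> ln x <= x - 1.
Proof.
move=> x0; have [z ->] := ln_exists x x0; rewrite ln_exp.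
case: (Req_dec z 0) => [->|nz]; first by rewrite exp_0; lra.
have := exp_ineq1 z nz; lra.
Qed.

Lemma ln_step a : 0 < a -> ln (a + 1) - ln a <= / a.
Proof.
move=> a0.
have e : ln (a + 1) - ln a = ln ((a + 1) * / a).
  rewrite ln_mult ?ln_Rinv; try lra; apply: Rinv_0_lt_compat; lra.
have pos : 0 < (a + 1) * / a.
  apply: Rmult_lt_0_compat; try lra; apply: Rinv_0_lt_compat; lra.
have := ln_le_sub1 _ pos.
have -> : (a + 1) * / a - 1 = / a by field; lra.
lra.
Qed.

Lemma ln_step2 a : 1 <= a -> / (a + 1) <= ln (a + 1) - ln a.
Proof.
move=> a1.
have e : ln a - ln (a + 1) = ln (a * / (a + 1)).
  rewrite ln_mult ?ln_Rinv; try lra; apply: Rinv_0_lt_compat; lra.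
have pos : 0 < a * / (a + 1).
  apply: Rmult_lt_0_compat; try lra; apply: Rinv_0_lt_compat; lra.
have := ln_le_sub1 _ pos.
have -> : a * / (a + 1) - 1 = - / (a + 1) by field; lra.
lra.
Qed.

Lemma H_low N : ln (INR N + 1) <= Hs N.
Proof.
elim: N => [|N IH]; first by rewrite /Hs /= Rplus_0_l ln_1; lra.
have -> : Hs N.+1 = Hs N + / INR N.+1 by [].
have a1 := INR_S1 N.
have := ln_step (INR N.+1) ltac:(lra).
rewrite S_INR in IH *; lra.
Qed.

Lemma H_up N : Hs N.+1 <= 1 + ln (INR N.+1).
Proof.
elim: N => [|N IH].
  rewrite /Hs /= ln_1 Rinv_1; lra.
have -> : Hs N.+2 = Hs N.+1 + / INR N.+2 by [].
have a1 := INR_S1 N.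
have := ln_step2 _ a1.
rewrite (S_INR N.+1); lra.
Qed.

Lemma ratio_close L l e : 0 < l -> 0 < e -> l - e * l < L -> L < l + e * l ->
  R_dist (L / l) 1 < e.
Proof.
move=> l0 e0 h1 h2.
have il : 0 < / l by apply: Rinv_0_lt_compat.
have ll : l * / l = 1 by field; lra.
rewrite /R_dist; apply: Rabs_def1.
  have : (L - (l + e * l)) * / l < 0 by apply: Rmult_neg_pos; lra.
  rewrite /Rdiv; nra.
have : (L - (l - e * l)) * / l > 0 by apply: Rmult_lt_0_compat; lra.
rewrite /Rdiv; nra.
Qed.

Lemma nat_dens (A : nat -> Prop) M : (forall n, leq M n -> A n) -> has_natural_density A 1.
Proof.
move=> HA eps he.
have [k Hk] := INR_unbounded (INR M / eps).
exists k.+1 => n /leP hn.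
have hn' := nat_le_R hn.
have l0 : 0 < INR n by have := INR_S1 k; lra.
have hM : INR M < eps * INR n.
  have : INR M / eps < INR n by have := nat_le_R (leqnSn k); lra.
  move=> h; apply (Rmult_lt_compat_l eps) in h => //.
  by move: h; have -> : eps * (INR M / eps) = INR M by field; lra.
have [b1 [b2 b3]] := count_bounds _ _ HA n.
apply: ratio_close => //; first lra.
have : 0 < eps * INR n by apply: Rmult_lt_0_compat.
lra.
Qed.

Lemma log_dens (A : nat -> Prop) M : (forall n, leq M n -> A n) -> has_log_density A 1.
Proof.
move=> HA eps he.
set K := (INR M + 1) / eps.
have K0 : 0 < K by rewrite /K; apply: Rdiv_lt_0_compat => //; have := pos_INR M; lra.
have [k Hk] := INR_unbounded (exp K).
exists k.+1 => n /leP hn.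
have hn' := nat_le_R hn.
have hk' := nat_le_R (leqnSn k).
have l0 : 0 < INR n by have := exp_pos K; lra.
have lK : K < ln (INR n).
  rewrite -[X in X < _]ln_exp; apply: ln_increasing; [exact: exp_pos | lra].
have hM : INR M + 1 < eps * ln (INR n).
  have := Rmult_lt_compat_l eps _ _ he lK.
  by have -> : eps * K = INR M + 1 by rewrite /K; field; lra.
have [b1 [b2 [b3 b4]]] := log_bounds _ _ HA n.
have hlow := H_low n.
have hln : ln (INR n) < ln (INR n + 1) by apply: ln_increasing; lra.
have hup : Hs n <= 1 + ln (INR n).
  move: hn; case: (n) => [|m] // _; exact: H_up.
apply: ratio_close; try lra.
Qed.


Theorem proposition5p1 :
  liminf_eq D (1/2) /\
  (forall u : R, 0 <= u < 1/2 ->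
     (exists N : nat, forall n : nat, (1 <= n)%coq_nat -> ~ Nset u n -> (n < N)%coq_nat) /\
     has_natural_density (Nset u) 1 /\
     has_log_density (Nset u) 1).
Proof.
split; first by split; [exact: part1 | exact: part2].
move=> u [u0 u1].
have [N HN] := part1 (1/2 - u) ltac:(lra).
have HA : forall n, leq (maxn N 1) n -> Nset u n.
  move=> n; rewrite geq_max => /andP[h1 h2]; split => //; have := HN n h1; lra.
split; last split; [| exact: nat_dens HA | exact: log_dens HA].
exists N => n /leP n1 nS; apply/ltP; case: (ltnP n N) => // h; exfalso; apply: nS; split => //.
have := HN n h; lra.
Qed.
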